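(* In the Setting below, let $I$ be an $\mathfrak n$-primary ideal of $S$. Then $$g(I)=c(I)-1=\max\{\mathrm{Val}(a)\mid a\in (I:_K\mathfrak n)\setminus I\}.$$
   Context: Setting: $(S,\mathfrak n)$ is a one-dimensional Noetherian local domain, not regular, with infinite residue field $k$ and quotient field $K$; its integral closure $\overline S$ in $K$ is a DVR and a finite $S$-module, with uniformizer $t$, and $S/\mathfrak n\to\overline S/t\overline S$ is an isomorphism. $\mathrm{Val}$ denotes the valuation of $\overline S$ on $K$ with $\mathrm{Val}(t)=1$. For fractional ideals, $I:_KJ=\{a\in K\mid aJ\subseteq I\}$. For an ideal $I$, $\mathfrak C_I=I:_K\overline S$ and $c(I)$ is the integer with $\mathfrak C_I=t^{c(I)}\overline S$. The Frobenius number of $I$ is $g(I)=\max\{\mathrm{Val}(a)\mid a\in K\setminus I,\ a\neq0\}$. *)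

(* Defs.v *)
From HB Require Import structures.
From mathcomp Require Import all_boot all_order all_algebra.
Set Implicit Arguments. Unset Strict Implicit. Unset Printing Implicit Defensive.
Import Order.TTheory GRing.Theory Num.Theory.
Local Open Scope ring_scope.

(* All rings are subsets of a fixed field K (the quotient field of S);
   subsets of K are Prop-valued predicates K -> Prop. *)
Section Defs.
Variable K : fieldType.
Implicit Types (S I J M P Q : K -> Prop).

Definition subring S :=
  [/\ S 0, S 1, (forall x y, S x -> S y -> S (x - y))
    & (forall x y, S x -> S y -> S (x * y))].

Definition quotient_field S :=
  forall x, exists a b, [/\ S a, S b, b != 0 & x = a / b].

Definition is_ideal S I :=
  [/\ (forall x, I x -> S x), I 0, (forall x y, I x -> I y -> I (x + y))
    & (forall r x, S r -> I x -> I (r * x))].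

Definition S_comb S (g : seq K) x :=
  exists c : seq K, [/\ size c = size g, (forall i, S c`_i)
    & x = \sum_(i < size g) c`_i * g`_i].

Definition fin_gen S M :=
  exists g : seq K, (forall i, (i < size g)%N -> M g`_i) /\
    (forall x, M x -> S_comb S g x).

Definition noetherian S := forall J, is_ideal S J -> fin_gen S J.

Definition maxideal S x := S x /\ ~ (exists y, S y /\ x * y = 1).

(* S is local: its non-units form an ideal (the maximal ideal n). *)
Definition local S := is_ideal S (maxideal S).

Definition prime_ideal S P :=
  [/\ is_ideal S P, ~ P 1
    & forall a b, S a -> S b -> P (a * b) -> P a \/ P b].

(* Krull dimension one (S a local domain): (0) is strictly contained in n,
   and every nonzero prime ideal is n. *)
Definition dim_one S :=
  (exists x, maxideal S x /\ x != 0) /\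
  forall P, prime_ideal S P -> (exists x, P x /\ x != 0) ->
    forall x, P x <-> maxideal S x.

(* Not regular: for a one-dimensional local ring, regular means that
   the maximal ideal is principal. *)
Definition not_regular S :=
  ~ exists z, forall y, maxideal S y <-> exists s, S s /\ y = s * z.

Definition residue_infinite S :=
  forall s : seq K, exists x, S x /\ forall y, y \in s -> ~ maxideal S (x - y).

(* Val : K -> int is a (discrete) valuation on K (its value at 0 is
   irrelevant and never used). *)
Definition valuation (Val : K -> int) :=
  (forall x y, x != 0 -> y != 0 -> Val (x * y) = Val x + Val y) /\
  (forall x y, x != 0 -> y != 0 -> x + y != 0 ->
     Num.min (Val x) (Val y) <= Val (x + y)).

(* The valuation ring of Val (this is \overline S). *)
Definition valring (Val : K -> int) x := x = 0 \/ 0 <= Val x.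

Definition integral S x :=
  exists p : {poly K}, [/\ p \is monic, (forall i, S p`_i) & root p x].

Definition integral_closure_is S Val :=
  forall x, integral S x <-> valring Val x.

(* The natural map S/n -> \overline S / t \overline S is an isomorphism:
   its kernel is n and it is surjective.  (x \in t\overline S iff
   x = 0 or Val x >= 1.) *)
Definition residue_iso S (Val : K -> int) :=
  (forall x, S x -> (maxideal S x <-> (x = 0 \/ 0 < Val x))) /\
  (forall v, valring Val v -> exists s, S s /\ (v - s = 0 \/ 0 < Val (v - s))).

Definition setting S (Val : K -> int) (t : K) :=
  [/\ subring S, quotient_field S, noetherian S, local S & dim_one S] /\
  not_regular S /\ residue_infinite S /\
  [/\ valuation Val, t != 0 & Val t = 1] /\
  [/\ integral_closure_is S Val, fin_gen S (valring Val) & residue_iso S Val].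

Definition colon I J := fun a => forall x, J x -> I (a * x).

Definition tpow_valring (Val : K -> int) (t : K) (c : int) :=
  fun x => exists v, valring Val v /\ x = t ^ c * v.

Definition primary S Q :=
  [/\ is_ideal S Q, ~ Q 1
    & forall a b, S a -> S b -> Q (a * b) -> ~ Q a -> exists k, Q (b ^+ k)].

Definition n_primary S I :=
  primary S I /\ forall x, S x -> (maxideal S x <-> exists k, I (x ^+ k)).

End Defs.

Definition is_max (P : int -> Prop) (m : int) :=
  P m /\ forall v, P v -> (v <= m)%R.

(* Main.v *)
Require Import Defs.
From HB Require Import structures.
From mathcomp Require Import all_boot all_order all_algebra.
From mathcomp Require Import zify.
From Stdlib Require Import Classical.
Import Order.TTheory GRing.Theory Num.Theory.
Local Open Scope ring_scope.

Section Helpers.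
Variable K : fieldType.
Variable Val : K -> int.
Hypothesis HV : forall x y : K, x != 0 -> y != 0 -> Val (x * y) = Val x + Val y.

Lemma Val1 : Val 1 = 0.
Proof.
have := @HV 1 1 (oner_neq0 K) (oner_neq0 K); rewrite mulr1 => h; lia.
Qed.

Lemma ValV (x : K) : x != 0 -> Val x^-1 = - Val x.
Proof.
move=> x0; have := @HV x x^-1 x0 (invr_neq0 x0); rewrite mulfV // Val1 => h; lia.
Qed.

Lemma ValXn (t : K) (n : nat) : t != 0 -> Val (t ^+ n) = (n%:Z * Val t)%R.
Proof.
move=> t0; elim: n => [|n IH]; first by rewrite expr0 Val1 mul0r.
rewrite exprS HV ?expf_neq0 // IH.
rewrite -[(n.+1)%:Z]/(1 + n%:Z) mulrDl mul1r //.
Qed.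

Lemma ValXz (t : K) (z : int) : t != 0 -> Val t = 1 -> Val (t ^ z) = z.
Proof.
move=> t0 Vt; case: z => n.
  by rewrite /exprz ValXn // Vt mulr1.
rewrite /exprz ValV ?expf_neq0 // ValXn // Vt mulr1 NegzE //.
Qed.

Lemma vr_mul (x y : K) : valring Val x -> valring Val y -> valring Val (x * y).
Proof.
case: (eqVneq x 0) => [->|x0]; first by rewrite mul0r; left.
case: (eqVneq y 0) => [->|y0]; first by rewrite mulr0; left.
move=> [/eqP|hx]; first by rewrite (negbTE x0).
move=> [/eqP|hy]; first by rewrite (negbTE y0).
right; rewrite HV //; exact: addr_ge0.
Qed.

End Helpers.

Lemma nat_min (P : nat -> Prop) : (exists n, P n) -> exists m, P m /\ forall k, P k -> (m <= k)%N.
Proof.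
move=> [n Pn]; elim: n {-2}n (leqnn n) Pn => [|N IH] n hn Pn.
  exists n; split=> // k _; by move: hn; rewrite leqn0 => /eqP ->.
case: (classic (exists k, P k /\ (k < n)%N)) => [[k [Pk hk]]|H].
  apply: (IH k) => //; lia.
exists n; split=> // k Pk; rewrite leqNgt; apply/negP => hk; apply: H; by exists k.
Qed.

Lemma conductor (K : fieldType) (S : K -> Prop) (g : seq K) :
  subring S -> quotient_field S ->
  exists d, [/\ d != 0, S d & forall i, (i < size g)%N -> S (d * g`_i)].
Proof.
move=> [S0 S1 Ssub Smul] Sqf; elim: g => [|x g [d [d0 Sd Hd]]].
  by exists 1; split => //; rewrite oner_neq0.
have [a [b [Sa Sb b0 ->]]] := Sqf x.
exists (d * b); split; first by rewrite mulf_neq0.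
  exact: Smul.
case=> [|i] /= hi.
  rewrite -mulrA [b * _]mulrC divfK //; exact: Smul.
rewrite mulrC mulrA; apply: Smul => //; rewrite mulrC; exact: Hd.
Qed.

Theorem lemma4p3 (K : fieldType) (S : K -> Prop) (Val : K -> int) (t : K)
    (I : K -> Prop) :
  setting S Val t -> n_primary S I ->
  exists c : int,
    (forall x, colon I (valring Val) x <-> tpow_valring Val t c x) /\
    is_max (fun v => exists a, [/\ a != 0, ~ I a & Val a = v]) (c - 1) /\
    is_max (fun v => exists a, [/\ colon I (maxideal S) a, ~ I a & Val a = v])
      (c - 1).
Proof.
move=> [[Ssub Sqf _ _ Sdim] [_ [_ [[[HVm _] t0 Vt] [_ Hfg [Hres _]]]]]].
move=> [[[IS I0 IadD ImulS] I1 _] Irad].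
have Ssub' := Ssub; move: Ssub' => [S0 S1 SB SM].
have SD : forall x y, S x -> S y -> S (x + y).
  move=> x y Sx Sy; have := SB x (0 - y) Sx (SB 0 y S0 Sy).
  by rewrite sub0r opprK.
set Col := colon I (valring Val).
have [y0 [Cy0 y00]] : exists y, Col y /\ y != 0.
  have [g [_ Hg]] := Hfg.
  have [d [d0 Sd Hd]] := @conductor K S g Ssub Sqf.
  have [[x [Mx x0]] _] := Sdim.
  have [k Ik] := (Irad x Mx.1).1 Mx.
  exists (x ^+ k * d); split; last by rewrite mulf_neq0 ?expf_neq0.
  move=> v /Hg [c [_ Sc ->]].
  have Sdv : S (d * \sum_(i < size g) c`_i * g`_i).
    rewrite mulr_sumr; apply: (big_ind S) => // i _.
    by rewrite mulrCA; apply: SM => //; apply: Hd.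
  by rewrite -mulrA mulrC; apply: ImulS.
have Colpos : forall x, Col x -> x != 0 -> 0 < Val x.
  move=> x Cx x0; rewrite ltNge; apply/negP => hx; apply: I1.
  rewrite -(mulfV x0); apply: Cx; right; rewrite ValV //; lia.
have [m [[ym [Cym [ym0 Vym]]] Hm]] :
    exists m : nat, (exists y, Col y /\ y != 0 /\ Val y = m%:Z) /\
      forall k : nat, (exists y, Col y /\ y != 0 /\ Val y = k%:Z) -> (m <= k)%N.
  apply: nat_min; have := Colpos _ Cy0 y00.
  case e: (Val y0) => [n|n] h; last by [].
  by exists n, y0; split; [|split].
set c : int := m%:Z.
have cmin : forall y, Col y -> y != 0 -> c <= Val y.
  move=> y Cy y0'; have := Colpos _ Cy y0'.
  case e: (Val y) => [n|n] h; last by [].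
  have := Hm n; rewrite /c; move=> H; have := H (ex_intro _ y (conj Cy (conj y0' e))).
  lia.
have big : forall x, x != 0 -> c <= Val x -> I x.
  move=> x x0 hx; rewrite -(mulVKf ym0 x); apply: Cym; right.
  rewrite HVm ?mulf_neq0 ?invr_neq0 // ValV // Vym; rewrite /c in hx; lia.
have bigc : forall x, x != 0 -> c <= Val x -> Col x.
  move=> x x0 hx v [->|hv]; first by rewrite mulr0.
  case: (eqVneq v 0) => [->|v0]; first by rewrite mulr0.
  apply: big; first by rewrite mulf_neq0.
  rewrite HVm //; lia.
have tc0 : t ^ c != 0 by apply: expfz_neq0.
exists c; split.
  move=> x; split.
    case: (eqVneq x 0) => [->|x0] Cx.
      by exists 0; split; [left|rewrite mulr0].
    exists ((t ^ c)^-1 * x); split; last by rewrite mulVKf.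
    right; rewrite HVm ?invr_neq0 // ValV // ValXz //.
    have := cmin _ Cx x0; lia.
  move=> [v [hv ->]].
  case: (eqVneq v 0) => [->|v0].
    by move=> y _; rewrite mulr0 mul0r.
  apply: bigc; first by rewrite mulf_neq0.
  rewrite HVm // ValXz //; case: hv => [/eqP|hv]; [by rewrite (negbTE v0)|lia].
have [v [hv nI]] : exists v, valring Val v /\ ~ I (t ^ (c - 1) * v).
  apply: NNPP => H; have tc1 : t ^ (c - 1) != 0 by apply: expfz_neq0.
  have := cmin (t ^ (c - 1)); rewrite ValXz //.
  have: ~ (c <= c - 1) by lia.
  move=> h1 h2; apply: h1; apply: h2 => // w hw.
  by apply: NNPP => h3; apply: H; exists w.
set a := t ^ (c - 1) * v.
have a0 : a != 0 by apply/eqP => e; apply: nI; rewrite -/a e.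
have v0 : v != 0 by apply/eqP => e; move: a0; rewrite /a e mulr0 eqxx.
have Va : Val a = c - 1.
  have e : Val a = c - 1 + Val v by rewrite /a HVm ?expfz_neq0 // ValXz.
  case: hv => [/eqP|hv]; first by rewrite (negbTE v0).
  case: (leP (Val v) 0) => h; first lia.
  exfalso; apply: nI; apply: (big a) => //; lia.
have ub : forall x, x != 0 -> ~ I x -> Val x <= c - 1.
  move=> x x0 nx; case: (leP (Val x) (c - 1)) => // h; exfalso; apply: nx.
  apply: big => //; lia.
split; split.
- by exists a.
- by move=> w [x [x0 nx <-]]; apply: ub.
- exists a; split => // x Mx.
  case: (eqVneq x 0) => [->|x0]; first by rewrite mulr0.
  have [x00|xp] := (Hres x Mx.1).1 Mx.
    by move: x0; rewrite x00 eqxx.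
  apply: big; first by rewrite mulf_neq0.
  rewrite HVm // Va; lia.
- move=> w [x [_ nx <-]]; apply: ub => //.
  by apply/eqP => e; apply: nx; rewrite e.
Qed.
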